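(* Let $d\ge 3$, let $\mathcal M$ be a model of $\mathrm{PQM}_d$, and let $\varphi(x)$ be an $\mathcal L_d$-formula in the single free variable $x$ which is a finite conjunction of literals, each of the form $[t(x):p]$ or $\neg[t(x):p]$ with $p\in\mathbb H_d$ and $t(x)$ a term obtained from $x$ by applying finitely many function symbols $u_U$, $\pi_q$. If $\mathcal V_d\models\exists x\,\varphi(x)$, then $\mathcal M\models\exists x\,\varphi(x)$.
   Context: Notation. For $d\ge 1$, $\mathbb H_d$ is the set of complex linear subspaces of $\mathbb C^d$, ordered by inclusion $\le$, with $\top=\mathbb C^d$, $\bot=\{0\}$, $p^\bot$ the orthogonal complement, $p\wedge q=p\cap q$ and $p\vee q=p+q$. $\mathbb V_d\subseteq\mathbb H_d$ is the set of one-dimensional subspaces (rays). $\mathbb U_d$ is the set of unitary operators on $\mathbb C^d$, and for $U\in\mathbb U_d$, $p\in\mathbb H_d$, $U(p)=\{Uv: v\in p\}$. The Sasaki projection is $p\,\&\,q := q\cap(q^\bot+p)$. Subspaces $p,q$ are compatible iff $p=(p\wedge q)\vee(p\wedge q^\bot)$. Language $\mathcal L_d$: a first-order language without equality and without constants, having a unary function symbol $u_U$ for each $U\in\mathbb U_d$, a unary function symbol $\pi_q$ for each $q\in\mathbb H_d$, and a unary relation symbol $[\,\cdot:p]$ for each $p\in\mathbb H_d$. Theory $\mathrm{PQM}_d$ (over $\mathcal L_d$) has the following axioms, for all $p,q\in\mathbb H_d$ and $U\in\mathbb U_d$: ($\neg\bot$) $\exists x\,\neg[x:\bot]$; ($\top$)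 $\forall x\,[x:\top]$; ($\le$) if $p\le q$: $\forall x\,([x:p]\to[x:q])$; ($\wedge$) if $p,q$ are compatible: $\forall x\,([x:p]\wedge[x:q]\to[x:p\wedge q])$; ($\pi_i$) $\forall x\,([x:p]\to[\pi_q(x):p\,\&\,q])$; ($\pi_c$) if $p\le q$: $\forall x\,([\pi_p(\pi_q(x)):\bot]\to[\pi_p(x):\bot])$; ($\pi_\bot$) $\forall x\,([\pi_q(x):\bot]\to[x:q^\bot])$; ($u_i$) $\forall x\,([x:p]\to[u_U(x):U(p)])$; ($u_e$) $\forall x\,([u_U(x):p]\to[x:U^{-1}(p)])$. Vector model $\mathcal V_d$: the $\mathcal L_d$-structure with domain $\mathbb V_d\cup\{\bot\}$, $u_U^{\mathcal V_d}(x)=U(x)$, $\pi_q^{\mathcal V_d}(x)=x\,\&\,q$, and $[x:p]^{\mathcal V_d}$ holds iff $x\le p$. *)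

(* Defs.v *)
(* C^d is modelled as row vectors 'rV[R[i]]_d, where
   R : realType (R[i] = complex numbers over the reals R, from
   mathcomp-real-closed). *)
From HB Require Import structures.
From mathcomp Require Import all_boot all_order all_algebra.
From mathcomp Require Import reals.
From mathcomp.real_closed Require Import complex.
From Stdlib Require Lists.List.
Unset Printing Implicit Defensive.
Import Order.TTheory GRing.Theory Num.Theory.
Local Open Scope ring_scope.

Section PQM.
Variables (R : realType) (d : nat).

Local Notation C := (R[i]).
Local Notation vec := ('rV[C]_d).

Definition subspace := {vspace vec}.

Definition hdot (v w : vec) : C := \sum_(i < d) v 0 i * (w 0 i)^*.

Definition hdot_lin (w : vec) : 'Hom(vec, C^o) :=
  linfun (fun v : vec => (hdot v w : C^o)).
Definition ortho (p : subspace) : subspace :=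
  (\bigcap_(w <- vbasis p) lker (hdot_lin w))%VS.

Definition topH : subspace := fullv.
Definition botH : subspace := 0%VS.
Definition meetH (p q : subspace) : subspace := (p :&: q)%VS.
Definition joinH (p q : subspace) : subspace := (p + q)%VS.
Definition leH (p q : subspace) : bool := (p <= q)%VS.

Definition sasaki (p q : subspace) : subspace :=
  meetH q (joinH (ortho q) p).

Definition compatible (p q : subspace) : Prop :=
  p = joinH (meetH p q) (meetH p (ortho q)).

Definition is_unitary (U : 'M[C]_d) : bool :=
  U *m (map_mx Num.conj U)^T == 1%:M.
Definition unitary := {U : 'M[C]_d | is_unitary U}.

(* U(p) = { U v | v in p }; with row vectors, (U v)^T = v^T U^T *)
Definition act_lin (U : 'M[C]_d) : 'End(vec) :=
  linfun (fun v : vec => v *m U^T).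
Definition actU (U : unitary) (p : subspace) : subspace :=
  (act_lin (val U) @: p)%VS.
Definition invU (U : unitary) : 'M[C]_d := invmx (val U).
Definition actUinv (U : unitary) (p : subspace) : subspace :=
  (act_lin (invU U) @: p)%VS.

Inductive term : Type :=
  | tvar : term
  | tu : unitary -> term -> term
  | tpi : subspace -> term -> term.

Record literal : Type := Lit { lpos : bool; lterm : term; lsub : subspace }.

Definition conj_formula := seq literal.

Record structure : Type := Structure {
  dom : Type;
  u_ : unitary -> dom -> dom;
  pi_ : subspace -> dom -> dom;
  rel_ : subspace -> dom -> Prop }.

Fixpoint eval (M : structure) (t : term) (x : dom M) : dom M :=
  match t with
  | tvar => x
  | tu U t' => (u_ M) U (eval M t' x)
  | tpi q t' => (pi_ M) q (eval M t' x)
  end.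

Definition sat_lit (M : structure) (x : dom M) (l : literal) : Prop :=
  if lpos l then (rel_ M) (lsub l) (eval M (lterm l) x)
  else ~ (rel_ M) (lsub l) (eval M (lterm l) x).

Definition sat_formula (M : structure) (phi : conj_formula) (x : dom M) : Prop :=
  forall l, Stdlib.Lists.List.In l phi -> sat_lit M x l.

Definition sat_exists (M : structure) (phi : conj_formula) : Prop :=
  exists x : dom M, sat_formula M phi x.

Record PQM (M : structure) : Prop := {
  ax_nbot : exists x : dom M, ~ rel_ M botH x;
  ax_top : forall x : dom M, rel_ M topH x;
  ax_le : forall p q, leH p q -> forall x : dom M, rel_ M p x -> rel_ M q x;
  ax_meet : forall p q, compatible p q -> forall x : dom M,
      rel_ M p x -> rel_ M q x -> rel_ M (meetH p q) x;
  ax_pi_i : forall p q (x : dom M), rel_ M p x -> rel_ M (sasaki p q) (pi_ M q x);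
  ax_pi_c : forall p q, leH p q -> forall x : dom M,
      rel_ M botH (pi_ M p (pi_ M q x)) -> rel_ M botH (pi_ M p x);
  ax_pi_bot : forall q (x : dom M), rel_ M botH (pi_ M q x) -> rel_ M (ortho q) x;
  ax_u_i : forall p U (x : dom M), rel_ M p x -> rel_ M (actU U p) (u_ M U x);
  ax_u_e : forall p U (x : dom M), rel_ M p (u_ M U x) -> rel_ M (actUinv U p) x }.

(* domain: rays together with bot, i.e. subspaces of dimension <= 1 *)
Definition vdom := {p : subspace | (\dim p <= 1)%N}.

Lemma botH_dim : (\dim botH <= 1)%N.
Proof. by rewrite /botH dimv0. Qed.

Definition vbot : vdom := exist _ botH botH_dim.

(* the interpretations below always land in vdom; insubd is only used
   to package the value as an element of the domain *)
Definition vmodel : structure :=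
  @Structure vdom
    (fun U x => insubd vbot (actU U (val x)))
    (fun q x => insubd vbot (sasaki (val x) q))
    (fun p x => leH (val x) p).

End PQM.

(* Main.v *)
From HB Require Import structures.
From mathcomp Require Import all_boot all_order all_algebra.
From mathcomp Require Import reals.
From mathcomp.real_closed Require Import complex.
From mathcomp Require Import ring lra zify.
From Stdlib Require Import Classical_Prop.
Require Import Defs.
Import Order.TTheory GRing.Theory Num.Theory.
Local Open Scope ring_scope.
Section Lin.
Variables (R : realType) (d : nat).
Local Notation C := (R[i]).
Local Notation vec := ('rV[C]_d).
Local Notation hdot := (hdot R d).
Local Notation ortho := (ortho R d).
Local Notation sasaki := (sasaki R d).
Local Notation subspace := (subspace R d).

Definition hdotl (w : vec) : vec -> C^o := fun v => hdot v w.
Lemma hdotl_lin w : linear (hdotl w).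
Proof. move=> a u v; rewrite /hdotl /hdot.
rewrite scaler_sumr -big_split /=; apply: eq_bigr => i _.
by rewrite !mxE mulrDl -scalerAl. Qed.
HB.instance Definition _ w := GRing.isLinear.Build C vec C^o *:%R (hdotl w) (hdotl_lin w).
Lemma hdot_linE w v : hdot_lin R d w v = hdot v w.
Proof. rewrite /hdot_lin. exact: (lfunE (hdotl w) v). Qed.

Lemma hdotDl u v w : hdot (u + v) w = hdot u w + hdot v w.
Proof. exact: (linearD (hdotl w)). Qed.
Lemma hdotZl k u w : hdot (k *: u) w = k * hdot u w.
Proof. rewrite /hdot mulr_sumr; apply: eq_bigr => i _. by rewrite !mxE mulrA. Qed.
Lemma hdotNl u w : hdot (- u) w = - hdot u w.
Proof. exact: (linearN (hdotl w)). Qed.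
Lemma hdotBl u v w : hdot (u - v) w = hdot u w - hdot v w.
Proof. exact: (linearB (hdotl w)). Qed.
Lemma hdot0l w : hdot 0 w = 0.
Proof. exact: (linear0 (hdotl w)). Qed.
Lemma hdot_suml I (r : seq I) (P : pred I) (F : I -> vec) w :
  hdot (\sum_(i <- r | P i) F i) w = \sum_(i <- r | P i) hdot (F i) w.
Proof. exact: (linear_sum (hdotl w)). Qed.
Lemma hdotC v w : hdot w v = (hdot v w)^*.
Proof. rewrite /hdot rmorph_sum; apply: eq_bigr => i _.
by rewrite rmorphM /= conjCK mulrC. Qed.
Lemma hdotDr u v w : hdot w (u + v) = hdot w u + hdot w v.
Proof. by rewrite !(hdotC _ w) hdotDl rmorphD. Qed.
Lemma hdotZr k u w : hdot w (k *: u) = k^* * hdot w u.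
Proof. by rewrite !(hdotC _ w) hdotZl rmorphM. Qed.
Lemma hdotNr u w : hdot w (- u) = - hdot w u.
Proof. by rewrite !(hdotC _ w) hdotNl rmorphN. Qed.
Lemma hdotBr u v w : hdot w (u - v) = hdot w u - hdot w v.
Proof. by rewrite hdotDr hdotNr. Qed.
Lemma hdot0r w : hdot w 0 = 0.
Proof. by rewrite hdotC hdot0l conjC0. Qed.
Lemma hdot_ge0 v : 0 <= hdot v v.
Proof. by apply: sumr_ge0 => i _; apply: mul_conjC_ge0. Qed.
Lemma hdot_eq0 v : (hdot v v == 0) = (v == 0).
Proof.
apply/idP/idP => [|/eqP->]; last by rewrite hdot0l.
rewrite /hdot psumr_eq0; last by move=> i _; apply: mul_conjC_ge0.
move=> /allP H; apply/eqP/rowP => i; rewrite mxE.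
by have := H i (mem_index_enum _); rewrite mul_conjC_eq0 /= => /eqP.
Qed.

Lemma memv_ortho_seq (s : seq vec) v :
  (v \in (\big[@capv C vec/fullv]_(w <- s) lker (hdot_lin R d w))%VS) <->
  (forall w, w \in s -> hdot v w = 0).
Proof.
elim: s => [|w s IH]; first by rewrite big_nil memvf; split => // _ w.
rewrite big_cons memv_cap memv_ker hdot_linE; split.
  move=> /andP[/eqP h1 /IH h2] w'; rewrite inE => /orP[/eqP->//|]; exact: h2.
move=> H; apply/andP; split; first by apply/eqP; apply: H; rewrite inE eqxx.
by apply/IH => w' hw'; apply: H; rewrite inE hw' orbT.
Qed.

Lemma memv_ortho (p : subspace) v :
  (v \in ortho p) <-> (forall w, w \in p -> hdot v w = 0).
Proof.
rewrite /Defs.ortho memv_ortho_seq; split; last first.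
  by move=> H w hw; apply: H; apply: vbasis_mem.
move=> H w /coord_vbasis ->.
rewrite hdotC hdot_suml big1 ?conjC0 // => i _.
rewrite hdotZl hdotC H ?conjC0 ?mulr0 //.
by apply: mem_nth; rewrite size_tuple.
Qed.

Lemma ortho_cap (p : subspace) : (p :&: ortho p = 0)%VS.
Proof.
apply/eqP; rewrite -subv0; apply/subvP => x /memv_capP[hp ho].
rewrite memv0 -hdot_eq0; apply/eqP; exact: (memv_ortho p x).1 ho x hp.
Qed.

Lemma dim_full : \dim (fullv : subspace) = d.
Proof. by rewrite dimvf /= dim_matrix mul1r. Qed.
Lemma dim_le_d (U : subspace) : (\dim U <= d)%N.
Proof. by rewrite -[X in (_ <= X)%N]dim_full dimvS ?subvf. Qed.

Lemma dim_hyp w : (d <= (\dim (lker (hdot_lin R d w))).+1)%N.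
Proof.
have h := limg_ker_dim (hdot_lin R d w) fullv.
rewrite capfv dim_full in h.
have h2 : (\dim (hdot_lin R d w @: fullv) <= 1)%N.
  by apply: (leq_trans (dimvS (subvf _))); rewrite dimvf.
lia.
Qed.

Lemma dim_capseq (s : seq vec) :
  (d <= \dim (\big[@capv C vec/fullv]_(w <- s) lker (hdot_lin R d w)) + size s)%N.
Proof.
elim: s => [|w s IH]; first by rewrite big_nil dim_full addn0.
rewrite big_cons /=.
set A : subspace := lker _; set B : subspace := (\big[_/_]_(_ <- _) _)%VS.
have h1 := dimv_sum_cap A B.
have h2 := dim_le_d (A + B)%VS.
have h3 := dim_hyp w.
rewrite -/A in h3. rewrite -/B in IH. move: IH h1 h2 h3. move: (\dim A) (\dim B) (\dim (A :&: B)%VS) (\dim (A + B)%VS) (size s). lia.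
Qed.

Lemma dim_ortho (p : subspace) : \dim (ortho p) = (d - \dim p)%N.
Proof.
have h1 := dim_capseq (vbasis p); rewrite size_tuple in h1.
have h2 := dimv_disjoint_sum (ortho_cap p).
have h3 := dim_le_d (p + ortho p)%VS.
rewrite h2 in h3; rewrite /Defs.ortho in h1 h3 *.
move: h1 h3; move: (\dim p) (\dim (\bigcap_(w <- vbasis p) lker (hdot_lin R d w))%VS). lia.
Qed.

Lemma add_ortho (p : subspace) : (p + ortho p = fullv)%VS.
Proof.
apply/eqP; rewrite eqEdim subvf /= (dimv_disjoint_sum (ortho_cap p)) dim_ortho dim_full.
have := dim_le_d p.
lia.
Qed.

Lemma ortho_ortho (p : subspace) : ortho (ortho p) = p.
Proof.
apply/esym/eqP; rewrite eqEdim !dim_ortho.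
have := dim_le_d p.
move=> hd; rewrite subKn // leqnn andbT.
apply/subvP => x hx; apply/memv_ortho => w /memv_ortho hw.
by rewrite hdotC hw // conjC0.
Qed.

Lemma decomp (p : subspace) x : exists2 x1, x1 \in p & exists2 x2, x2 \in ortho p & x = x1 + x2.
Proof. by apply/memv_addP; rewrite add_ortho memvf. Qed.

Lemma ortho_le (p q : subspace) : (p <= q)%VS -> (ortho q <= ortho p)%VS.
Proof.
move=> /subvP pq; apply/subvP => x /memv_ortho hx; apply/memv_ortho => w hw.
exact/hx/pq.
Qed.

Lemma mem_ortho_line x e : (x \in ortho <[e]>%VS) = (hdot x e == 0).
Proof.
apply/idP/idP => [/memv_ortho H|/eqP H]; first by rewrite H ?memv_line.
apply/memv_ortho => w /vlineP[k ->]; by rewrite hdotZr H mulr0.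
Qed.


Lemma sasaki_line (q : subspace) x x1 x2 : x1 \in q -> x2 \in ortho q -> x = x1 + x2 ->
  (sasaki <[x]> q <= <[x1]>)%VS.
Proof.
move=> h1 h2 ->; apply/subvP => z.
rewrite /Defs.sasaki /meetH /joinH => /memv_capP[zq /memv_addP[w hw [y /vlineP[k ey] ez]]].
have h0 : w + k *: x2 \in (q :&: ortho q)%VS.
  apply/memv_capP; split; last by rewrite rpredD // rpredZ.
  have -> : w + k *: x2 = z - k *: x1.
    by rewrite ez ey scalerDr [k *: x1 + _]addrC addrA addrK.
  by rewrite rpredB // rpredZ.
move: h0; rewrite ortho_cap memv0 => /eqP h0.
have -> : z = k *: x1 by rewrite ez ey scalerDr addrCA h0 addr0.
by rewrite rpredZ // memv_line.
Qed.

Lemma sasaki_le_q (p q : subspace) : (sasaki p q <= q)%VS.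
Proof. exact: capvSl. Qed.

Lemma sasaki_orth (p q : subspace) : (p <= ortho q)%VS -> sasaki p q = 0%VS.
Proof.
move=> h; rewrite /Defs.sasaki /meetH /joinH (addv_idPl h).
exact: ortho_cap.
Qed.

Lemma sasaki_bot (q : subspace) : sasaki 0%VS q = 0%VS.
Proof. by apply: sasaki_orth; apply: sub0v. Qed.

Lemma sasaki_sub (p q : subspace) : (ortho q <= p)%VS -> (sasaki p q <= p)%VS.
Proof.
move=> h; rewrite /Defs.sasaki /meetH /joinH.
by apply: (subv_trans (capvSr _ _)); rewrite subv_add h subvv.
Qed.

Lemma compat_orth (p q : subspace) : (p <= ortho q)%VS ->
  compatible R d p q /\ meetH R d p q = 0%VS.
Proof.
move=> h.
have hm : meetH R d p q = 0%VS.
  apply/eqP; rewrite -subv0 /meetH -(ortho_cap q) capvC.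
  by apply: capvS => //; apply: subvv.
split => //; rewrite /compatible hm /joinH add0v /meetH.
by apply/esym/capv_idPl.
Qed.

Lemma compat_split (f s : subspace) : (f <= s)%VS ->
  compatible R d s (ortho f) /\ meetH R d s (ortho f) = meetH R d s (ortho f).
Proof.
move=> fs; split => //; rewrite /compatible /joinH /meetH ortho_ortho.
rewrite (capv_idPr fs); apply/eqP; rewrite eqEsubv; apply/andP; split; last first.
  by rewrite subv_add capvSl fs.
apply/subvP => x hx; have [x1 h1 [x2 h2 ex]] := decomp f x.
rewrite ex addrC; apply: memv_add => //; apply/memv_capP; split => //.
have -> : x2 = x - x1 by rewrite ex [x1 + x2]addrC addrK.
by rewrite rpredB // (subvP fs).
Qed.


Lemma line_le_ortho a b : hdot a b = 0 -> (<[a]> <= ortho <[b]>)%VS.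
Proof.
move=> h; apply/subvP => x /vlineP[k ->]; rewrite mem_ortho_line hdotZl h mulr0 //.
Qed.

Lemma conjR (r : R) : ((r%:C)%C)^* = (r%:C)%C :> C.
Proof. by rewrite conj_Creal // complex_real. Qed.

Lemma hdot_real v : (hdot v v)^* = hdot v v.
Proof. by rewrite -hdotC. Qed.

Lemma vline_scale (k : C) (x : vec) : k != 0 -> <[k *: x]>%VS = <[x]>%VS.
Proof.
move=> hk; apply/eqP; rewrite eqEsubv; apply/andP; split.
  by rewrite -memvE rpredZ // memv_line.
rewrite -memvE; apply/vlineP; exists k^-1; by rewrite scalerA mulVf // scale1r.
Qed.

Definition rc (r : R) : C := ((r)%:C)%C.
Lemma rcE (r : R) : r = 0 -> rc r = 0.
Proof. by move=> ->; rewrite /rc rmorph0. Qed.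
Lemma rcD a b : rc (a + b) = rc a + rc b. Proof. exact: rmorphD. Qed.
Lemma rcB a b : rc (a - b) = rc a - rc b. Proof. exact: rmorphB. Qed.
Lemma rcN a : rc (- a) = - rc a. Proof. exact: rmorphN. Qed.
Lemma rcM a b : rc (a * b) = rc a * rc b. Proof. exact: rmorphM. Qed.
Lemma rcX a n : rc (a ^+ n) = rc a ^+ n. Proof. exact: rmorphXn. Qed.
Lemma rcn n : rc n%:R = n%:R. Proof. exact: rmorph_nat. Qed.
Lemma rc1 : rc 1 = 1. Proof. exact: rmorph1. Qed.
Lemma rc_conj r : (rc r)^* = rc r. Proof. exact: conjR. Qed.
Lemma rc_conjN r : (- rc r)^* = - rc r. Proof. by rewrite rmorphN /= rc_conj. Qed.


Lemma nonneg_rc (z : C) : 0 <= z -> z = rc (complex.Re z).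
Proof.
move=> hz; rewrite [LHS]complexE (ger0_Im hz) /rc.
by rewrite rmorph0 mulr0 addr0.
Qed.

Lemma rc_gt0 r : (0 < rc r) = (0 < r).
Proof. by rewrite /rc -ltcR rmorph0. Qed.

Lemma rc_eq0 r : (rc r == 0) = (r == 0).
Proof. by rewrite /rc eq_complex /= eqxx andbT. Qed.

Lemma hdot_rcZ k l (x y : vec) : hdot (rc k *: x) (rc l *: y) = rc (k * l) * hdot x y.
Proof. by rewrite hdotZl hdotZr rc_conj rcM mulrA. Qed.

Lemma unitize (x : vec) : x != 0 -> exists2 k : R, 0 < k & hdot (rc k *: x) (rc k *: x) = 1.
Proof.
move=> hx.
have h0 : 0 < hdot x x by rewrite lt0r hdot_eq0 hx hdot_ge0.
have e := nonneg_rc _ (ltW h0); set h := complex.Re _ in e.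
have hp : 0 < h by rewrite -rc_gt0 -e.
exists (1 / Num.sqrt h); first by rewrite divr_gt0 // sqrtr_gt0.
rewrite hdot_rcZ e -rcM -rc1; congr rc.
have sq := sqr_sqrtr (ltW hp).
have sn : Num.sqrt h != 0 by rewrite gt_eqF // sqrtr_gt0.
rewrite -{3}sq; field; done.
Qed.

Lemma exists_orth2 (hd : (3 <= d)%N) (u w : vec) :
  exists2 v : vec, v != 0 & (hdot v u = 0 /\ hdot v w = 0).
Proof.
set S := (<[u]> + <[w]>)%VS.
have hS : (\dim S <= 2)%N.
  apply: (leq_trans (dimv_add_leqif _ _).1).
  by rewrite !dim_vline; case: (u != 0); case: (w != 0).
have hO : (0 < \dim (ortho S))%N by rewrite dim_ortho; move: hS hd; move: (\dim S); lia.
exists (vpick (ortho S)); first by rewrite vpick0 -dimv_eq0 -lt0n.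
have /memv_ortho hv := memv_pick (ortho S).
split; apply: hv; rewrite /S.
  by apply/memv_addP; exists u; [exact: memv_line | exists 0; rewrite ?mem0v ?addr0].
by apply/memv_addP; exists 0; [exact: mem0v | exists w; rewrite ?memv_line ?add0r].
Qed.

Lemma rc0 : rc 0 = 0. Proof. exact: rcE. Qed.
Lemma rc_ge0 r : (0 <= rc r) = (0 <= r). Proof. exact: ler0c. Qed.

Lemma combo_ab (x y : vec) s t :
  rc s *: (x - y) + rc t *: (x + y) = rc (s + t) *: x + rc (t - s) *: y.
Proof.
rewrite scalerBr scalerDr rcD rcB scalerDl scalerBl.
by rewrite addrACA [- _ + _]addrC.
Qed.

Section Model.
Variables (M : structure R d) (hM : PQM R d M).
Local Notation rel := (rel_ R d M).
Local Notation pi := (pi_ R d M).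
Local Notation domM := (dom R d M).
Let ax_le := ax_le R d M hM.
Let ax_meet := ax_meet R d M hM.
Let ax_pi_i := ax_pi_i R d M hM.
Let ax_pi_bot := ax_pi_bot R d M hM.
Let ax_pi_c := ax_pi_c R d M hM.
Let ax_u_i := ax_u_i R d M hM.
Let ax_u_e := ax_u_e R d M hM.

Lemma relle (p q : subspace) x : (p <= q)%VS -> rel p x -> rel q x.
Proof. by move=> h; apply: ax_le. Qed.

Lemma rel_orth (a b : subspace) y : rel a y -> rel b y -> (a <= ortho b)%VS -> rel 0%VS y.
Proof.
move=> ha hb hab; have [hc hm] := compat_orth a b hab.
by rewrite -hm; apply: ax_meet.
Qed.

Lemma ruleN (y : domM) a b n : n != 0 ->
  hdot a b * hdot n n = hdot a n * hdot n b ->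
  rel <[a]>%VS y -> rel <[b]>%VS y -> rel <[n]>%VS y.
Proof.
move=> nz heq ha hb.
set N := hdot n n.
have hN : N != 0 by rewrite /N hdot_eq0.
set q := ortho <[n]>%VS.
have hoq : ortho q = <[n]>%VS by rewrite ortho_ortho.
set a1 := a - (hdot a n / N) *: n.
set b1 := b - (hdot b n / N) *: n.
have ha1 : a1 \in q.
  by rewrite mem_ortho_line /a1 hdotBl hdotZl -/N divfK // subrr.
have hb1 : b1 \in q.
  by rewrite mem_ortho_line /b1 hdotBl hdotZl -/N divfK // subrr.
have hn k : k *: n \in ortho q by rewrite hoq rpredZ // memv_line.
have sa := sasaki_line _ _ _ _ ha1 (hn (hdot a n / N)) (esym (subrK _ _)).
have sb := sasaki_line _ _ _ _ hb1 (hn (hdot b n / N)) (esym (subrK _ _)).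
have pa := relle _ _ _ sa (ax_pi_i _ q _ ha).
have pb := relle _ _ _ sb (ax_pi_i _ q _ hb).
have h0 : hdot a1 b1 = 0.
  rewrite /a1 /b1 !hdotBl !hdotBr !hdotZl !hdotZr -/N.
  rewrite rmorphM fmorphV /= hdot_real -hdotC.
  have -> : hdot a b = hdot a n * hdot n b / N by rewrite -heq mulfK.
  move: hN; rewrite /N => hN. by field.
have := rel_orth _ _ _ pa pb (line_le_ortho _ _ h0).
by move/ax_pi_bot; rewrite hoq.
Qed.


Definition ON (u v w : vec) := [/\ hdot u u = 1, hdot v v = 1 & hdot w w = 1] /\
  [/\ hdot u v = 0, hdot u w = 0 & hdot v w = 0].
Definition cmb (u v w : vec) (a b c : C) := a *: u + b *: v + c *: w.

Lemma hdot_comb u v w a b c a' b' c' : ON u v w ->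
  hdot (cmb u v w a b c) (cmb u v w a' b' c') = a * a'^* + b * b'^* + c * c'^*.
Proof.
case=> [[h1 h2 h3] [h4 h5 h6]].
have h4' : hdot v u = 0 by rewrite hdotC h4 conjC0.
have h5' : hdot w u = 0 by rewrite hdotC h5 conjC0.
have h6' : hdot w v = 0 by rewrite hdotC h6 conjC0.
rewrite /cmb !hdotDl !hdotZl !hdotDr !hdotZr h1 h2 h3 h4 h5 h6 h4' h5' h6'.
by rewrite !mulr0 !mulr1 !addr0 !add0r.
Qed.

Lemma ON_swap u v w : ON u v w -> ON v u w.
Proof. by case=> [[h1 h2 h3] [h4 h5 h6]]; split; split => //; rewrite hdotC h4 conjC0. Qed.

Lemma cmb_swap u v w a b c : cmb u v w a b c = cmb v u w b a c.
Proof. by rewrite /cmb [a *: u + _]addrC. Qed.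

Lemma cmb_nz u v w a b : ON u v w -> cmb u v w a b 1 != 0.
Proof.
move=> hon; apply/eqP => h.
have := hdot_comb u v w a b 1 0 0 1 hon; rewrite h hdot0l !conjC0 conjC1 !mulr0 !add0r mulr1.
by move/eqP; rewrite eq_sym oner_eq0.
Qed.


Lemma hdot_rc u v w a b c a' b' c' : ON u v w ->
  hdot (cmb u v w (rc a) (rc b) (rc c)) (cmb u v w (rc a') (rc b') (rc c')) =
  rc (a * a' + b * b' + c * c').
Proof. by move=> hon; rewrite hdot_comb // !rc_conj -!rcM -!rcD. Qed.

Lemma cmb_nz_rc u v w a b : ON u v w -> cmb u v w (rc a) (rc b) (rc 1) != 0.
Proof. by rewrite rc1; apply: cmb_nz. Qed.

Lemma rc_eq (a b c c' : R) : a * b = c * c' -> rc a * rc b = rc c * rc c'.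
Proof. by rewrite -!rcM => ->. Qed.

Lemma ruleN_rc u v w (y : domM) a1 a2 a3 b1 b2 b3 n1 n2 : ON u v w ->
  (a1 * b1 + a2 * b2 + a3 * b3) * (n1 * n1 + n2 * n2 + 1 * 1) =
  (a1 * n1 + a2 * n2 + a3 * 1) * (n1 * b1 + n2 * b2 + 1 * b3) ->
  rel <[cmb u v w (rc a1) (rc a2) (rc a3)]>%VS y ->
  rel <[cmb u v w (rc b1) (rc b2) (rc b3)]>%VS y ->
  rel <[cmb u v w (rc n1) (rc n2) (rc 1)]>%VS y.
Proof.
move=> hon heq; apply: ruleN; first exact: cmb_nz_rc.
by rewrite !hdot_rc //; apply: rc_eq.
Qed.

Lemma orth_rc u v w (y : domM) a1 a2 a3 b1 b2 b3 : ON u v w ->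
  a1 * b1 + a2 * b2 + a3 * b3 = 0 ->
  rel <[cmb u v w (rc a1) (rc a2) (rc a3)]>%VS y ->
  rel <[cmb u v w (rc b1) (rc b2) (rc b3)]>%VS y -> rel (0%VS : subspace) y.
Proof.
move=> hon heq ha hb; apply: (rel_orth _ _ y ha hb); apply: line_le_ortho.
by rewrite hdot_rc // heq rcE.
Qed.

Lemma TR N : forall (p : R) u v w (y : domM), ON u v w -> 0 < p -> p < 1 ->
  1 <= N%:R * p ^+ 2 ->
  rel <[cmb u v w (rc p) (rc 0) (rc 1)]>%VS y ->
  rel <[cmb u v w (rc (- p)) (rc 0) (rc 1)]>%VS y -> rel (0%VS : subspace) y.
Proof.
elim: N => [|N IH] p u v w y hon p0 p1 hN ha hb.
  by move: hN; rewrite mul0r ler10.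
case: (lerP 1 (2 * p ^+ 2)) => hp.
- set x := Num.sqrt ((2 * p ^+ 2 - 1) / (2 - p ^+ 2)).
  set z := Num.sqrt (x ^+ 2 + 1).
  have h2p : 0 < 2 - p ^+ 2 by nra.
  have hx : x ^+ 2 * (2 - p ^+ 2) - (2 * p ^+ 2 - 1) = 0.
    rewrite sqr_sqrtr; first by field; rewrite lt0r_neq0.
    by apply: divr_ge0; nra.
  have hz : z ^+ 2 - (x ^+ 2 + 1) = 0.
    by rewrite sqr_sqrtr ?subrr // addr_ge0 // sqr_ge0.
  clearbody x z.
  have r1 := ruleN_rc u v w y p 0 1 (- p) 0 1 x z hon _ ha hb.
  have r2 := ruleN_rc u v w y p 0 1 (- p) 0 1 x (- z) hon _ ha hb.
  apply: (orth_rc u v w y x z 1 x (- z) 1 hon _ (r1 _) (r2 _)).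
  + transitivity (-(z ^+ 2 - (x ^+ 2 + 1))); first by ring.
    by rewrite hz oppr0.
  + apply/subr0_eq; transitivity ((1 - p ^+ 2) * (z ^+ 2 - (x ^+ 2 + 1)) +
       (x ^+ 2 * (2 - p ^+ 2) - (2 * p ^+ 2 - 1))); first by ring.
    by rewrite hx hz mulr0 addr0.
  + apply/subr0_eq; transitivity ((1 - p ^+ 2) * (z ^+ 2 - (x ^+ 2 + 1)) +
       (x ^+ 2 * (2 - p ^+ 2) - (2 * p ^+ 2 - 1))); first by ring.
    by rewrite hx hz mulr0 addr0.
- set x := Num.sqrt (p ^+ 2 / (1 - p ^+ 2)).
  have h1p : 0 < 1 - p ^+ 2 by nra.
  have hx : x ^+ 2 * (1 - p ^+ 2) - p ^+ 2 = 0.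
    rewrite sqr_sqrtr; first by field; rewrite lt0r_neq0.
    by apply: divr_ge0; nra.
  have x0 : 0 < x by rewrite sqrtr_gt0 divr_gt0 // exprn_gt0.
  clearbody x.
  have x1 : x < 1.
    have : x ^+ 2 < 1 by nra.
    nra.
  have hxN : 1 <= N%:R * x ^+ 2.
    have hN0 : 0 <= N%:R :> R by apply: ler0n.
    move: hN; rewrite -natr1 => hN.
    nra.
  have r1 := ruleN_rc u v w y p 0 1 (- p) 0 1 0 x hon _ ha hb.
  have r2 := ruleN_rc u v w y p 0 1 (- p) 0 1 0 (- x) hon _ ha hb.
  apply: (IH x v u w y (ON_swap _ _ _ hon) x0 x1 hxN); rewrite cmb_swap.
  + apply: r1.
    apply/subr0_eq; transitivity (x ^+ 2 * (1 - p ^+ 2) - p ^+ 2); first by ring.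
    exact: hx.
  + apply: r2.
    apply/subr0_eq; transitivity (x ^+ 2 * (1 - p ^+ 2) - p ^+ 2); first by ring.
    exact: hx.
Qed.


Lemma two_ray (hd : (3 <= d)%N) (y : domM) (a b : vec) : a != 0 -> b != 0 ->
  <[a]>%VS != <[b]>%VS -> rel <[a]>%VS y -> rel <[b]>%VS y -> rel (0%VS : subspace) y.
Proof.
move=> a0 b0 ab ha hb.
have [hab|hab] := eqVneq (hdot a b) 0.
  exact: (rel_orth _ _ y ha hb (line_le_ortho _ _ hab)).
set k := hdot a b.
set b' := k *: b.
have eb : <[b]>%VS = <[b']>%VS by rewrite /b' vline_scale.
have b'0 : b' != 0 by rewrite scaler_eq0 negb_or hab b0.
have [ka ka0 hka] := unitize a a0.
have [kb kb0 hkb] := unitize b' b'0.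
set ah := rc ka *: a. set bh := rc kb *: b'.
have ea : <[a]>%VS = <[ah]>%VS by rewrite /ah vline_scale // rc_eq0 gt_eqF.
have eb2 : <[b']>%VS = <[bh]>%VS by rewrite /bh vline_scale // rc_eq0 gt_eqF.
have hc0 : 0 <= hdot ah bh.
  rewrite /ah /bh hdot_rcZ /b' hdotZr -/k.
  apply: mulr_ge0; first by rewrite rc_ge0 ltW // mulr_gt0.
  by rewrite mulrC; exact: mul_conjC_ge0.
have hcne : hdot ah bh != 0.
  rewrite /ah /bh hdot_rcZ /b' hdotZr -/k.
  apply: mulf_neq0; first by rewrite rc_eq0 gt_eqF // mulr_gt0.
  by apply: mulf_neq0; rewrite ?conjC_eq0.
set g := complex.Re (hdot ah bh).
have eg : hdot ah bh = rc g := nonneg_rc _ hc0.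
have g0 : 0 < g by rewrite -rc_gt0 -eg lt0r hcne hc0.
have eg' : hdot bh ah = rc g by rewrite hdotC eg rc_conj.
set u0 := ah - bh; set w0 := ah + bh.
have hu0 : hdot u0 u0 = rc (2 - 2 * g).
  rewrite /u0 hdotBl !hdotBr hka hkb eg eg' rcB rcM rcn; ring.
have hw0 : hdot w0 w0 = rc (2 + 2 * g).
  rewrite /w0 hdotDl !hdotDr hka hkb eg eg' rcD rcM rcn; ring.
have huw : hdot u0 w0 = 0.
  rewrite /u0 /w0 hdotBl !hdotDr hka hkb eg eg'; ring.
have u00 : u0 != 0.
  apply/eqP => /eqP; rewrite subr_eq0 => /eqP e.
  by move: ab; rewrite ea eb eb2 e eqxx.
have g1 : g < 1.
  have : 0 < hdot u0 u0 by rewrite lt0r hdot_eq0 u00 hdot_ge0.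
  rewrite hu0 rc_gt0; lra.
set su := Num.sqrt (2 - 2 * g). set sw := Num.sqrt (2 + 2 * g).
have su0 : 0 < su by rewrite sqrtr_gt0; lra.
have sw0 : 0 < sw by rewrite sqrtr_gt0; lra.
have su2 : su ^+ 2 = 2 - 2 * g by rewrite sqr_sqrtr //; lra.
have sw2 : sw ^+ 2 = 2 + 2 * g by rewrite sqr_sqrtr //; lra.
have sun : su != 0 by rewrite gt_eqF.
have swn : sw != 0 by rewrite gt_eqF.
set u := rc (1 / su) *: u0. set w := rc (1 / sw) *: w0.
have [v v0 [hvu hvw]] := exists_orth2 hd u w.
have [kv kv0 hkv] := unitize v v0. set vh := rc kv *: v.
have hon : ON u vh w.
  split; split.
  - rewrite /u hdot_rcZ hu0 -rcM -rc1; congr rc; rewrite -su2; field; done.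
  - exact: hkv.
  - rewrite /w hdot_rcZ hw0 -rcM -rc1; congr rc; rewrite -sw2; field; done.
  - by rewrite /vh hdotZr hdotC hvu conjC0 mulr0.
  - by rewrite /u /w hdot_rcZ huw mulr0.
  - by rewrite /vh hdotZl hvw mulr0.
set p := su / sw.
have p0 : 0 < p by rewrite divr_gt0.
have p1 : p < 1.
  by rewrite /p ltr_pdivrMr // mul1r ltr_sqrt; lra.
have eah : rc (sw / 2) *: cmb u vh w (rc p) (rc 0) (rc 1) = ah.
  rewrite /cmb rc0 scale0r addr0 rc1 scale1r /u /w !scalerA -!rcM scalerDr !scalerA -!rcM.
  rewrite combo_ab.
  have -> : sw / 2 * (p * (1 / su)) + sw / 2 * (1 / sw) = 1 by rewrite /p; field; rewrite ?sun ?swn.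
  have -> : sw / 2 * (1 / sw) - sw / 2 * (p * (1 / su)) = 0 by rewrite /p; field; rewrite ?sun ?swn.
  by rewrite rc1 rc0 scale1r scale0r addr0.
have ebh : rc (sw / 2) *: cmb u vh w (rc (- p)) (rc 0) (rc 1) = bh.
  rewrite /cmb rc0 scale0r addr0 rc1 scale1r /u /w !scalerA -!rcM scalerDr !scalerA -!rcM.
  rewrite combo_ab.
  have -> : sw / 2 * (- p * (1 / su)) + sw / 2 * (1 / sw) = 0 by rewrite /p; field; rewrite ?sun ?swn.
  have -> : sw / 2 * (1 / sw) - sw / 2 * (- p * (1 / su)) = 1 by rewrite /p; field; rewrite ?sun ?swn.
  by rewrite rc1 rc0 scale1r scale0r add0r.
have sw20 : rc (sw / 2) != 0 by rewrite rc_eq0 gt_eqF // divr_gt0.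
have ha' : rel <[cmb u vh w (rc p) (rc 0) (rc 1)]>%VS y.
  by rewrite -(vline_scale _ _ sw20) eah -ea.
have hb' : rel <[cmb u vh w (rc (- p)) (rc 0) (rc 1)]>%VS y.
  by rewrite -(vline_scale _ _ sw20) ebh -eb2 -eb.
have p20 : 0 < p ^+ 2 by rewrite exprn_gt0.
pose N := Num.bound (1 / p ^+ 2).
have hN : 1 <= N%:R * p ^+ 2.
  have := archi_boundP (ltW (divr_gt0 ltr01 p20)).
  rewrite ltr_pdivrMr // => h; exact: ltW.
exact: (TR N p u vh w y hon p0 p1 hN ha' hb').
Qed.

Lemma notin_rel (hd : (3 <= d)%N) (y : domM) (e : vec) (p : subspace) :
  rel <[e]>%VS y -> rel p y -> ~~ (<[e]> <= p)%VS -> rel (0%VS : subspace) y.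
Proof.
move=> he hp; rewrite -memvE => enp.
have e0 : e != 0 by apply: contraNneq enp => ->; rewrite mem0v.
have [e1 h1 [e2 h2 ee]] := decomp p e.
have [e10|e10] := eqVneq e1 0.
  apply: (rel_orth _ _ y he hp); rewrite -memvE ee e10 add0r //.
set q := ortho <[e1]>%VS.
have hq1 : e2 \in q by rewrite mem_ortho_line (memv_ortho p e2).1.
have hoq : ortho q = <[e1]>%VS by rewrite ortho_ortho.
have hq2 : e1 \in ortho q by rewrite hoq memv_line.
have sa := sasaki_line q e e2 e1 hq1 hq2 (etrans ee (addrC _ _)).
have sp : (sasaki p q <= p)%VS by apply: sasaki_sub; rewrite hoq -memvE.
have r1 := relle _ _ _ sa (ax_pi_i _ q _ he).
have r2 := relle _ _ _ sp (ax_pi_i _ q _ hp).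
have r0 := rel_orth _ _ _ r1 r2 (eq_ind_r _ h2 (esym (memvE _ _))).
have := ax_pi_bot _ _ r0; rewrite hoq => hr.
apply: (two_ray hd y e e1 e0 e10 _ he hr).
by apply: contraNneq enp => eq; rewrite memvE eq -memvE.
Qed.

Lemma exists_ray_elt n : forall (s : subspace) (x : domM), \dim s = n -> rel s x ->
  ~ rel (0%VS : subspace) x ->
  exists g : vec, exists z : domM, [/\ g != 0, rel <[g]>%VS z & ~ rel (0%VS : subspace) z].
Proof.
elim: n => [|n IH] s x hs hx hn.
  by move/eqP: hs; rewrite dimv_eq0 => /eqP hs0; rewrite hs0 in hx.
set g := vpick s.
have s0 : s != 0%VS by rewrite -dimv_eq0 hs.
have g0 : g != 0 by rewrite vpick0.
have gs : (<[g]> <= s)%VS by rewrite -memvE memv_pick.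
set z := pi <[g]>%VS x.
have hz : rel <[g]>%VS z := relle _ _ _ (sasaki_le_q _ _) (ax_pi_i _ _ _ hx).
case: (classic (rel (0%VS : subspace) z)) => hz0; last by exists g, z.
have ho := ax_pi_bot _ _ hz0.
have [hc _] := compat_split _ _ gs.
have hm := ax_meet _ _ hc x hx ho.
apply: (IH _ x _ hm) => //.
move: hc; rewrite /compatible /meetH /joinH ortho_ortho (capv_idPr gs) => hc.
have hdisj : ((s :&: ortho <[g]>) :&: <[g]> = 0)%VS.
  apply/eqP; rewrite -subv0 -(ortho_cap <[g]>%VS) capvC.
  by apply: capvS; [apply: subvv | apply: capvSr].
have := dimv_disjoint_sum hdisj; rewrite -hc hs dim_vline g0 addn1.
by case.
Qed.

Lemma move_ray (hd : (3 <= d)%N) (g e : vec) (z : domM) : hdot g e != 0 ->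
  rel <[g]>%VS z -> ~ rel (0%VS : subspace) z ->
  rel <[e]>%VS (pi <[e]>%VS z) /\ ~ rel (0%VS : subspace) (pi <[e]>%VS z).
Proof.
move=> hge hg hz; split; first exact: (relle _ _ _ (sasaki_le_q _ _) (ax_pi_i _ _ _ hg)).
move=> h0; apply: hz; have ho := ax_pi_bot _ _ h0.
apply: (notin_rel hd z g _ hg ho).
by rewrite -memvE mem_ortho_line.
Qed.

Lemma get_ray_elt (hd : (3 <= d)%N) (e : vec) : e != 0 ->
  exists z : domM, rel <[e]>%VS z /\ ~ rel (0%VS : subspace) z.
Proof.
move=> e0.
have [x0 hx0] := ax_nbot R d M hM.
have ht := ax_top R d M hM x0.
have [g [z [g0 hg hz]]] := exists_ray_elt (\dim (topH R d)) (topH R d) x0 erefl ht hx0.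
have [hge|hge] := eqVneq (hdot g e) 0; last first.
  by exists (pi <[e]>%VS z); apply: move_ray hge hg hz.
set h := g + e.
have hgh : hdot g h != 0 by rewrite /h hdotDr hge addr0 hdot_eq0.
have hhe : hdot h e != 0 by rewrite /h hdotDl hge add0r hdot_eq0.
have [h1 h2] := move_ray hd g h z hgh hg hz.
by exists (pi <[e]>%VS (pi <[h]>%VS z)); apply: move_ray hhe h1 h2.
Qed.

Lemma dim1_line (r : subspace) : \dim r = 1%N -> r = <[vpick r]>%VS.
Proof.
move=> h1.
have r0 : vpick r != 0 by rewrite vpick0 -dimv_eq0 h1.
apply/eqP; rewrite eq_sym eqEdim -memvE memv_pick dim_vline r0 h1 //.
Qed.

Definition Rep (y : domM) (r : subspace) :=
  if r == 0%VS then rel (0%VS : subspace) y else rel r y /\ ~ rel (0%VS : subspace) y.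

Lemma Rep_rel0 y r : Rep y r -> rel r y.
Proof. by rewrite /Rep; case: eqP => [->|_ []]. Qed.

Lemma Rep_rel (hd : (3 <= d)%N) y r p : (\dim r <= 1)%N -> Rep y r -> (rel p y <-> (r <= p)%VS).
Proof.
rewrite /Rep; case: eqP => [->|r0] hdim h.
  by split => _; [exact: sub0v | exact: relle _ _ _ (sub0v p) h].
case: h => hr hn.
have d1 : \dim r = 1%N.
  apply/eqP; rewrite eqn_leq hdim lt0n dimv_eq0; exact/eqP.
have er := dim1_line _ d1.
split; last by move=> rp; exact: relle _ _ _ rp hr.
move=> hp; apply/negPn/negP => hnp; apply: hn.
by apply: (notin_rel hd y (vpick r) p); rewrite -?er.
Qed.

Lemma dim_actU U (r : subspace) : (\dim (actU R d U r) <= \dim r)%N.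
Proof.
have := limg_ker_dim (act_lin R d (val U)) r; rewrite /actU => <-.
exact: leq_addl.
Qed.

Lemma dim_sasaki (r q : subspace) : (\dim r <= 1)%N -> (\dim (sasaki r q) <= 1)%N.
Proof.
move=> hr; have [->|r0] := eqVneq r 0%VS; first by rewrite sasaki_bot dimv0.
have d1 : \dim r = 1%N by apply/eqP; rewrite eqn_leq hr lt0n dimv_eq0.
rewrite (dim1_line _ d1); set g := vpick r.
have [g1 h1 [g2 h2 eg]] := decomp q g.
apply: (leq_trans (dimvS (sasaki_line q g g1 g2 h1 h2 eg))).
by rewrite dim_vline leq_b1.
Qed.

Lemma rep_eval (hd : (3 <= d)%N) (t : term R d) (y : domM) (x : vdom R d) :
  Rep y (val x) -> Rep (eval R d M t y) (val (eval R d (vmodel R d) t x)).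
Proof.
move=> hy; elim: t => [|U t IH|q t IH] //=.
- set y' := eval R d M t y; set r := val (eval R d (vmodel R d) t x) in IH *.
  have hrd : (\dim r <= 1)%N := valP (eval R d (vmodel R d) t x).
  rewrite insubdK; last exact: (leq_trans (dim_actU U r) hrd).
  have hu := ax_u_i _ U _ (Rep_rel0 _ _ IH).
  rewrite /Rep; case: eqP => [e0|ne0]; first by rewrite -e0.
  split => // h0; have := ax_u_e _ _ _ h0; rewrite /actUinv limg0 => h0'.
  move: IH; rewrite /Rep; case: eqP => [r0|_ [_ hn]]; last exact: hn h0'.
  by move=> _; apply: ne0; rewrite -/r r0 /actU limg0.
- set y' := eval R d M t y; set r := val (eval R d (vmodel R d) t x) in IH *.
  have hrd : (\dim r <= 1)%N := valP (eval R d (vmodel R d) t x).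
  rewrite insubdK; last exact: (dim_sasaki r q hrd).
  have hp := ax_pi_i _ q _ (Rep_rel0 _ _ IH).
  rewrite /Rep; case: eqP => [e0|ne0]; first by rewrite -e0.
  split => // h0; have ho := ax_pi_bot _ _ h0.
  have IH' := IH; move: IH; rewrite /Rep; case: eqP => [r0|rne [hr hn]].
    by move=> _; apply: ne0; rewrite -/r r0 sasaki_bot.
  by apply: ne0; apply: sasaki_orth; apply/(Rep_rel hd y' r (ortho q) hrd IH').
Qed.

Lemma main_model (hd : (3 <= d)%N) (phi : conj_formula R d) :
  sat_exists R d (vmodel R d) phi -> sat_exists R d M phi.
Proof.
move=> [x hx].
have [y hy] : exists y, Rep y (val x).
  rewrite /Rep; case: eqP => [x0|x0].
    have [x1 _] := ax_nbot R d M hM; exists (pi 0%VS x1).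
    have := ax_pi_i (topH R d) 0%VS x1 (ax_top R d M hM x1).
    by apply: relle; apply: sasaki_le_q.
  have hrd : (\dim (val x) <= 1)%N := valP x.
  have d1 : \dim (val x) = 1%N.
    apply/eqP; rewrite eqn_leq hrd lt0n dimv_eq0; exact/eqP.
  have ev := dim1_line _ d1.
  have g0 : vpick (val x) != 0 by rewrite vpick0; exact/eqP.
  have [z [hz hz0]] := get_ray_elt hd (vpick (val x)) g0.
  by exists z; rewrite ev.
exists y => l hl; have := hx l hl; rewrite /sat_lit.
have hr := rep_eval hd (lterm R d l) y x hy.
have hd1 := valP (eval R d (vmodel R d) (lterm R d l) x).
have iff := Rep_rel hd _ _ (lsub R d l) hd1 hr.
case: (lpos R d l) => /=.
  by move=> h; apply/iff.
by move=> hn hm; apply: hn; apply/iff.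
Qed.

End Model.
End Lin.

Theorem mainTheorem14 (R : realType) (d : nat) (hd : (3 <= d)%N)
    (M : structure R d) (hM : PQM R d M) (phi : conj_formula R d) :
  sat_exists R d (vmodel R d) phi -> sat_exists R d M phi.
Proof. exact: main_model. Qed.
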